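(* Let $G$ be a distribution on $\mathbb{R}$ with Lebesgue density $g$, and let $\theta^g=T^*_{(\alpha,\lambda)}(G)$ be the best fitting parameter. Then the influence function of the minimum $S^*$-divergence functional $T^*_{(\alpha,\lambda)}$ at $G$ is $$IF(y;G,T^*_{(\alpha,\lambda)})=[J_g^*]^{-1}N_g^*(y),$$ where $$N_g^*(y)=A\left[\int (f^*_{\theta^g}(x))^B (g^*(x))^{A-1}\tilde u_{\theta^g}(x)W(x,y,h)\,dx-\int (f^*_{\theta^g})^B (g^* )^A\tilde u_{\theta^g}\right],$$ $$J_g^*=A\int (f^*_{\theta^g})^{1+\alpha}\tilde u_{\theta^g}\tilde u_{\theta^g}^T+\int\big(\tilde i_{\theta^g}-B\,\tilde u_{\theta^g}\tilde u_{\theta^g}^T\big)\big[(g^* )^A-(f^*_{\theta^g})^A\big](f^*_{\theta^g})^B .$$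
   Context: Let $\{F_\theta:\theta\in\Theta\subseteq\mathbb{R}^p\}$ be a parametric family of distributions on $\mathbb{R}$ with Lebesgue densities $f_\theta$. Fix $\alpha\ge 0$, $\lambda\in\mathbb{R}$ and put $A=1+\lambda(1-\alpha)$, $B=\alpha-\lambda(1-\alpha)$ (so $A+B=1+\alpha$). For densities $g,f$ the $S$-divergence is $S_{(\alpha,\lambda)}(g,f)=\frac1A\int f^{1+\alpha}-\frac{1+\alpha}{AB}\int f^Bg^A+\frac1B\int g^{1+\alpha}$ (defined by continuous limits when $A=0$ or $B=0$). Let $W(x,y,h)\ge0$ be a kernel with fixed bandwidth $h>0$ which, for each $y$, is a probability density in $x$. Define the smoothed densities $f^*_\theta(x)=\int W(x,y,h)f_\theta(y)\,dy$ and $g^*(x)=\int W(x,y,h)\,dG(y)$, the smoothed score $\tilde u_\theta(x)=\nabla_\theta\log f^*_\theta(x)$ and $\tilde i_\theta(x)=-\nabla_\theta\tilde u_\theta(x)$. The minimum $S^*$-divergence functional $T^*_{(\alpha,\lambda)}(G)$ is defined by $S_{(\alpha,\lambda)}(g^*,f^*_{T^*_{(\alpha,\lambda)}(G)})=\min_{\theta\in\Theta}S_{(\alpha,\lambda)}(g^*,f^*_\theta)$ and satisfies the estimating equation $\int K(\delta(x))(f^*_\theta(x))^{1+\alpha}\tilde u_\theta(x)\,dx=0$ with $\delta=g^*/f^*_\theta-1$ and $K(\delta)=((\delta+1)^A-1)/A$ ($K(\delta)=\log(1+\delta)$ if $A=0$). The influence function of a functional $T$ at $G$ is $IF(y;G,T)=\frac{\partial}{\partial\epsilon}T(G_\epsilon)\big|_{\epsilon=0}$,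 where $G_\epsilon=(1-\epsilon)G+\epsilon\wedge_y$ and $\wedge_y$ is the point mass at $y$. *)

(* Defs.v *)
From HB Require Import structures.
From mathcomp Require Import all_boot all_order all_algebra.
From mathcomp Require Import all_classical all_reals all_analysis.
Set Implicit Arguments. Unset Strict Implicit. Unset Printing Implicit Defensive.
Import Order.TTheory GRing.Theory Num.Theory.
Import numFieldNormedType.Exports.
Local Open Scope classical_set_scope.
Local Open Scope ring_scope.

Section SDiv.
Variable R : realType.

Definition Rint (F : R -> R) : R := Rintegral (@lebesgue_measure R) setT F.

Definition Rintegrable (F : R -> R) : Prop :=
  (@lebesgue_measure R).-integrable setT (EFin \o F).

Definition is_density (F : R -> R) : Prop :=
  measurable_fun setT F /\ (forall x, 0 <= F x) /\
  ((\int[@lebesgue_measure R]_x (F x)%:E)%E = 1%E).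

Definition SA (alpha lambda : R) : R := 1 + lambda * (1 - alpha).
Definition SB (alpha lambda : R) : R := alpha - lambda * (1 - alpha).

(* S-divergence S_(alpha,lambda)(g, f), with the continuous limits at A = 0
   or B = 0. *)
Definition Sdiv (alpha lambda : R) (g f : R -> R) : R :=
  let A := SA alpha lambda in let B := SB alpha lambda in
  if A == 0 then
    Rint (fun x => f x `^ (1 + alpha) * ln (f x / g x))
    - (1 + alpha)^-1 * Rint (fun x => f x `^ (1 + alpha) - g x `^ (1 + alpha))
  else if B == 0 then
    Rint (fun x => g x `^ (1 + alpha) * ln (g x / f x))
    - (1 + alpha)^-1 * Rint (fun x => g x `^ (1 + alpha) - f x `^ (1 + alpha))
  else
    A^-1 * Rint (fun x => f x `^ (1 + alpha))
    - (1 + alpha) / (A * B) * Rint (fun x => f x `^ B * g x `^ A)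
    + B^-1 * Rint (fun x => g x `^ (1 + alpha)).

Definition Kfun (A delta : R) : R :=
  if A == 0 then ln (1 + delta) else ((delta + 1) `^ A - 1) / A.

Definition smooth (W : R -> R -> R -> R) (h : R) (F : R -> R) : R -> R :=
  fun x => Rint (fun y => W x y h * F y).

(* Smoothed density of G_eps = (1-eps) G + eps Dirac_y, where G has density g:
   int W(x,z,h) dG_eps(z) = (1-eps) int W(x,z,h) g(z) dz + eps W(x,y,h). *)
Definition smooth_contam (W : R -> R -> R -> R) (h : R) (g : R -> R)
  (y eps : R) : R -> R :=
  fun x => (1 - eps) * smooth W h g x + eps * W x y h.

Variable p : nat.

Definition vint (F : R -> 'cV[R]_p) : 'cV[R]_p :=
  \col_i Rint (fun x => F x i 0).
Definition mint (F : R -> 'M[R]_p) : 'M[R]_p :=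
  \matrix_(i, j) Rint (fun x => F x i j).

Definition vintegrable (F : R -> 'cV[R]_p) : Prop :=
  forall i, Rintegrable (fun x => F x i 0).
Definition mintegrable (F : R -> 'M[R]_p) : Prop :=
  forall i j, Rintegrable (fun x => F x i j).

Definition ebasis (j : 'I_p) : 'cV[R]_p := delta_mx j 0.

Definition fstar (W : R -> R -> R -> R) (h : R) (f : 'cV[R]_p -> R -> R)
  (theta : 'cV[R]_p) : R -> R := smooth W h (f theta).

Definition ustar W h f (theta : 'cV[R]_p) (x : R) : 'cV[R]_p :=
  \col_j ('D_(ebasis j) (fun t : 'cV[R]_p => ln (fstar W h f t x)) theta).

Definition istar W h f (theta : 'cV[R]_p) (x : R) : 'M[R]_p :=
  - \matrix_(j, k) ('D_(ebasis k) (fun t : 'cV[R]_p => ustar W h f t x j 0) theta).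

Definition influence (c : R -> 'cV[R]_p) : 'cV[R]_p :=
  lim ((fun e => e^-1 *: (c e - c 0)) @ 0^'+).

End SDiv.

Section Functional.
Variables (R : realType) (p : nat) (alpha lambda : R)
  (W : R -> R -> R -> R) (h : R) (f : 'cV[R]_p -> R -> R).

Local Notation A := (SA alpha lambda).
Local Notation B := (SB alpha lambda).
Local Notation fs := (fstar W h f).
Local Notation us := (ustar W h f).
Local Notation iss := (istar W h f).

(* integrand of the estimating equation
   int K(delta(x)) (f*_theta(x))^(1+alpha) u~_theta(x) dx = 0,
   delta = g*/f*_theta - 1, for a smoothed data density gg = g*. *)
Definition est_integrand (gg : R -> R) (theta : 'cV[R]_p) (x : R) : 'cV[R]_p :=
  (Kfun A (gg x / fs theta x - 1) * fs theta x `^ (1 + alpha)) *: us theta x.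

Definition N1_integrand (gg : R -> R) (theta : 'cV[R]_p) (y x : R) : 'cV[R]_p :=
  (fs theta x `^ B * gg x `^ (A - 1) * W x y h) *: us theta x.
Definition N2_integrand (gg : R -> R) (theta : 'cV[R]_p) (x : R) : 'cV[R]_p :=
  (fs theta x `^ B * gg x `^ A) *: us theta x.
Definition Nstar (gg : R -> R) (theta : 'cV[R]_p) (y : R) : 'cV[R]_p :=
  A *: (vint (N1_integrand gg theta y) - vint (N2_integrand gg theta)).

Definition J1_integrand (theta : 'cV[R]_p) (x : R) : 'M[R]_p :=
  fs theta x `^ (1 + alpha) *: (us theta x *m (us theta x)^T).
Definition J2_integrand (gg : R -> R) (theta : 'cV[R]_p) (x : R) : 'M[R]_p :=
  ((gg x `^ A - fs theta x `^ A) * fs theta x `^ B) *: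
    (iss theta x - B *: (us theta x *m (us theta x)^T)).
Definition Jstar (gg : R -> R) (theta : 'cV[R]_p) : 'M[R]_p :=
  A *: mint (J1_integrand theta) + mint (J2_integrand gg theta).

End Functional.

(* Main.v *)
Require Import Defs.
From HB Require Import structures.
From mathcomp Require Import all_boot all_order all_algebra.
From mathcomp Require Import all_classical all_reals all_analysis.
From mathcomp Require Import ring lra.
Import Order.TTheory GRing.Theory Num.Theory.
Import numFieldNormedType.Exports.
Local Open Scope classical_set_scope.
Local Open Scope ring_scope.

Lemma Kfun_conv (R : realType) (A B al a P : R) : A != 0 -> A + B = 1 + al ->
  0 < a -> 0 < P ->
  Kfun A (a / P - 1) * P `^ (1 + al) = (a `^ A * P `^ B - P `^ (1 + al)) / A.
Proof.
move=> hA hAB ha hP; rewrite /Kfun (negbTE hA) subrK.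
have hPA : 0 < P `^ A by apply: powR_gt0.
have e1 : a `^ A = (a / P) `^ A * P `^ A.
  rewrite -powRM; last 2 first.
  - by apply: divr_ge0; apply: ltW.
  - exact: ltW.
  by rewrite divfK // gt_eqF.
have e2 : P `^ (1 + al) = P `^ A * P `^ B.
  by rewrite -hAB powRD // (gt_eqF hP) implybT.
rewrite e2 e1; field.
exact: hA.
Qed.

Lemma cvg_rl (R : realType) (T : normedModType R) (f : R -> T) (p : R) (l : T) :
  f x @[x --> p^'+] --> l -> f x @[x --> p^'-] --> l ->
  f x @[x --> p^'] --> l.
Proof.
move=> /cvgrPdist_le fppl /cvgrPdist_le fpnl; apply/cvgrPdist_le => e e0.
have {fppl}[a /= a0 fppl] := fppl _ e0.
have {fpnl}[b /= b0 fpnl] := fpnl _ e0.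
near=> t.
have : t != p by near: t; exact: nbhs_dnbhs_neq.
rewrite neq_lt => /orP[tp|pt].
- apply: fpnl => //=; near: t.
  exists (b / 2) => //=; first by rewrite divr_gt0.
  move=> z/= + _ => /lt_le_trans; apply.
  by rewrite ler_pdivrMr// ler_pMr// ler1n.
- apply: fppl =>//=; near: t.
  exists (a / 2) => //=; first by rewrite divr_gt0.
  move=> z/= + _ => /lt_le_trans; apply.
  by rewrite ler_pdivrMr// ler_pMr// ler1n.
Unshelve. all: by end_near. Qed.

Lemma ct_is_derive (R : realType) (V : normedModType R) (c : R -> V) (L : V) :
  (fun e => e^-1 *: (c e - c 0)) @ 0^'+ --> L ->
  is_derive (0:R) 1 (fun e => if 0 < e then c e else c 0 + e *: L) L.
Proof.
move=> hc.
set ct := fun e => _.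
have ct0 : ct 0 = c 0 by rewrite /ct ltxx scale0r addr0.
have hq : (fun h : R => h^-1 *: ((ct \o shift 0) (h *: 1) - ct 0)) @ 0^' --> L.
  apply: cvg_rl.
  - apply: cvg_trans hc; apply: near_eq_cvg; near=> e.
    have e0 : 0 < e by near: e; exact: nbhs_right_gt.
    have E : e%:A + 0 = e by rewrite addr0; exact: mulr1.
    by rewrite /= ct0 /ct E e0.
  - have hL : (fun _ : R => L) @ 0^'- --> L by apply: cvg_cst.
    apply: cvg_trans hL.
    apply: near_eq_cvg; near=> e.
    have e0 : e < 0 by near: e; exact: nbhs_left_lt.
    have E : e%:A + 0 = e by rewrite addr0; exact: mulr1.
    rewrite /= ct0 /ct E ltNge (ltW e0) /= addrAC subrr add0r.
    by rewrite scalerA mulVf ?scale1r // lt_eqF.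
apply: DeriveDef; first exact: cvgP hq.
exact: cvg_lim hq.
Unshelve. all: by end_near.
Qed.
Arguments ct_is_derive {R V c L}.

Lemma comp_is_derive (R : realType) (V W : normedModType R) (ct : R -> V)
  (L : V) (F : V -> W) :
  is_derive (0:R) 1 ct L -> differentiable F (ct 0) ->
  is_derive (0:R) 1 (F \o ct) ('d F (ct 0) L).
Proof.
move=> hct dF.
have dct : differentiable ct 0 by apply/derivable1_diffP; case: hct.
have dFc := differentiable_comp dct dF.
apply: DeriveDef; first exact/derivable1_diffP.
rewrite deriveE // diff_comp //= -(deriveE (1:R) dct).
by case: hct => _ ->.
Qed.
Arguments comp_is_derive {R V W ct L F}.

Lemma is_derive_mxP (R : realType) m n (M : R -> 'M[R]_(m,n)) (D : 'M[R]_(m,n)) :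
  is_derive (0:R) 1 M D <-> (forall i j, is_derive (0:R) 1 (fun e => M e i j) (D i j)).
Proof.
split.
- move=> [dM vM] i j.
  have dij := (derivable_mxP M 0 1).1 dM i j.
  apply: DeriveDef => //.
  by rewrite -vM derive_mx // mxE.
- move=> H.
  have dM : derivable M 0 1.
    by apply/derivable_mxP => i j; case: (H i j).
  apply: DeriveDef => //.
  rewrite derive_mx //; apply/matrixP => i j; rewrite mxE.
  by case: (H i j).
Qed.
Arguments is_derive_mxP {R m n M D}.

Lemma is_derive_affine (R : realType) (s w : R) :
  is_derive (0:R) 1 (fun e : R => (1 - e) * s + e * w) (w - s).
Proof.
have -> : (fun e : R => (1 - e) * s + e * w) = cst s + (w - s) \*: id.
  apply/funext => e; change ((1-e)*s + e*w = s + (w-s) * e); ring.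
have := is_deriveD (is_derive_cst s (0:R) 1) (is_deriveZ (w - s) (is_derive_id (0:R) 1)).
by move/is_derive_eq; apply; rewrite add0r; exact: mulr1.
Qed.
Arguments is_derive_affine {R} s w.

Lemma is_derive_powR_comp (R : realType) (f : R -> R) (df r : R) :
  0 < f 0 -> is_derive (0:R) 1 f df ->
  is_derive (0:R) 1 (fun e => f e `^ r) (r * f 0 `^ (r - 1) * df).
Proof.
move=> hf hd.
exact: (is_derive1_comp (f:=(@powR R)^~ r) (g:=f) (is_derive1_powR r hf) hd).
Qed.
Arguments is_derive_powR_comp {R f df} r.

Lemma scaleRE (R : realType) (a b : R) : a *: b = a * b.
Proof. by []. Qed.

Lemma E_derive (R : realType) (p : nat) (A B al s w : R) (ct : R -> 'cV[R]_p)
  (L : 'cV[R]_p) (phi : 'cV[R]_p -> R) (psi : 'cV[R]_p -> 'cV[R]_p) :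
  0 < s -> 0 < phi (ct 0) -> is_derive (0:R) 1 ct L ->
  differentiable phi (ct 0) -> differentiable psi (ct 0) ->
  is_derive (0:R) 1
   (fun e => ((((1 - e) * s + e * w) `^ A * phi (ct e) `^ B
               - phi (ct e) `^ (1 + al)) / A) *: psi (ct e))
   (((A * s `^ (A - 1) * (w - s)) * phi (ct 0) `^ B
      + s `^ A * (B * phi (ct 0) `^ (B - 1) * 'd phi (ct 0) L)
      - (1 + al) * phi (ct 0) `^ (1 + al - 1) * 'd phi (ct 0) L) / A
       *: psi (ct 0)
    + ((s `^ A * phi (ct 0) `^ B - phi (ct 0) `^ (1 + al)) / A)
       *: 'd psi (ct 0) L).
Proof.
move=> hs hphi hct dphi dpsi.
have hP : is_derive (0:R) 1 (phi \o ct) ('d phi (ct 0) L) := comp_is_derive hct dphi.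
have hQ : is_derive (0:R) 1 (psi \o ct) ('d psi (ct 0) L) := comp_is_derive hct dpsi.
have a0 : (1 - 0) * s + 0 * w = s by rewrite subr0 mul1r mul0r addr0.
have ha0 : 0 < (fun e : R => (1 - e) * s + e * w) 0 by rewrite /= a0.
have hP1 := is_derive_powR_comp A ha0 (is_derive_affine s w).
have hP2 := is_derive_powR_comp B hphi hP.
have hP3 := is_derive_powR_comp (1 + al) hphi hP.
have hK0 := is_deriveZ A^-1 (is_deriveB (is_deriveM hP1 hP2) hP3).
apply/is_derive_mxP => i j.
have hQij := is_derive_mxP.1 hQ i j.
have := is_deriveM hK0 hQij.
move/is_derive_eq => H.
have -> : (fun e => (((((1 - e) * s + e * w) `^ A * phi (ct e) `^ B
               - phi (ct e) `^ (1 + al)) / A) *: psi (ct e)) i j) =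
  (A^-1 \*: ((fun e : R => ((1 - e) * s + e * w) `^ A) * (fun e => (phi \o ct) e `^ B)
     - (fun e => (phi \o ct) e `^ (1 + al)))) * (fun e => (psi \o ct) e i j).
  apply/funext => e /=; rewrite mxE !fctE /= !scaleRE; ring.
apply: H.
rewrite !mxE /= !fctE /= a0 !scaleRE; ring.
Qed.

Lemma cV_decomp (R : realType) (p : nat) (L : 'cV[R]_p) :
  L = \sum_(k < p) L k 0 *: ebasis R k.
Proof.
apply/matrixP => i j; rewrite (ord1 j) summxE.
rewrite (bigD1 i) //= big1 ?addr0.
  by rewrite !mxE !eqxx mulr1.
move=> k ki; rewrite !mxE; rewrite eq_sym (negbTE ki) /= mulr0 //.
Qed.

Arguments cV_decomp {R p}.

Lemma dpsi_formula (R : realType) (p : nat) (psi : 'cV[R]_p -> 'cV[R]_p)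
  (th L : 'cV[R]_p) i :
  differentiable psi th ->
  'd psi th L i 0 = \sum_(k < p) L k 0 * 'D_(ebasis R k) (fun t => psi t i 0) th.
Proof.
move=> dpsi.
rewrite {1}(cV_decomp L) linear_sum summxE; apply: eq_bigr => k _.
rewrite linearZ mxE; congr (_ * _).
rewrite -(deriveE _ dpsi) derive_mx; last exact: diff_derivable.
by rewrite mxE.
Qed.

Lemma dphi_formula (R : realType) (p : nat) (phi : 'cV[R]_p -> R)
  (th L : 'cV[R]_p) :
  differentiable phi th -> 0 < phi th ->
  'd phi th L = phi th * \sum_(k < p) L k 0 * 'D_(ebasis R k) (fun t => ln (phi t)) th.
Proof.
move=> dphi hp.
have hln := is_derive1_ln hp.
have dln : differentiable (@ln R) (phi th).
  by apply/derivable1_diffP; case: hln.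
have dc : differentiable (@ln R \o phi) th := differentiable_comp dphi dln.
rewrite {1}(cV_decomp L) linear_sum big_distrr; apply: eq_bigr => k _.
rewrite linearZ /=.
have -> : (fun t => ln (phi t)) = @ln R \o phi by [].
rewrite deriveE // (diff_comp dphi dln) /= (diff1E dln) derive1E.
case: hln => _ ->.
rewrite !scaleRE; field; by rewrite gt_eqF.
Qed.

Arguments dphi_formula {R p phi th} L.
Arguments dpsi_formula {R p psi th} L i.

Lemma alg1 (R : realType) (a b F1 G FA FB Lk ui uk Dk : R) :
  (a * (F1 * (ui * uk)) + (G - FA) * FB * (- Dk - b * (ui * uk))) * Lk
  = a * F1 * ui * (Lk * uk) - (G - FA) * FB * (Lk * Dk)
    - (G - FA) * FB * b * ui * (Lk * uk).
Proof. ring. Qed.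

Lemma powR_split (R : realType) (x r : R) : 0 < x -> x `^ r = x `^ (r - 1) * x.
Proof.
move=> hx; rewrite -[in LHS](subrK 1 r) (@powRD _ x (r - 1) 1).
  by rewrite powRr1 // ltW.
by rewrite (gt_eqF hx) implybT.
Qed.

Lemma alg2 (R : realType) (a b al S1 g w FB SAp FB1 F F1a1 F1a FA ui c d : R) :
  a != 0 -> a + b = 1 + al ->
  SAp = S1 * g -> FB = FB1 * F -> F1a = F1a1 * F -> F1a1 = FA * FB1 ->
  (a * S1 * (w - g) * FB + SAp * (b * FB1 * (F * c)) - (1 + al) * F1a1 * (F * c)) / a * ui
  + (SAp * FB - F1a) / a * d
  = FB * S1 * w * ui - FB * SAp * ui
    - a^-1 * (a * F1a * ui * c - (SAp - FA) * FB * d - (SAp - FA) * FB * b * ui * c).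
Proof.
move=> ha hab -> -> -> ->.
have -> : b = 1 + al - a by rewrite -hab; ring.
by field.
Qed.

Lemma pt_id (R : realType) (p : nat) (alpha lambda : R) (W : R -> R -> R -> R) (h : R)
  (f : 'cV[R]_p -> R -> R) (gg : R -> R) (th L : 'cV[R]_p) (y x : R) :
  SA alpha lambda != 0 -> 0 < gg x -> 0 < fstar W h f th x ->
  differentiable (fun t => fstar W h f t x) th ->
  differentiable (fun t => ustar W h f t x) th ->
  let A := SA alpha lambda in let B := SB alpha lambda in
  let s := gg x in let w := W x y h in
  let phi := fun t => fstar W h f t x in let psi := fun t => ustar W h f t x in
   ((A * s `^ (A - 1) * (w - s)) * phi th `^ B
      + s `^ A * (B * phi th `^ (B - 1) * 'd phi th L)
      - (1 + alpha) * phi th `^ (1 + alpha - 1) * 'd phi th L) / A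
       *: psi th
    + ((s `^ A * phi th `^ B - phi th `^ (1 + alpha)) / A)
       *: 'd psi th L
  = N1_integrand alpha lambda W h f gg th y x - N2_integrand alpha lambda W h f gg th x
    - A^-1 *: ((A *: J1_integrand alpha W h f th x
                + J2_integrand alpha lambda W h f gg th x) *m L).
Proof.
move=> hA hs hf dphi dpsi A B s w phi psi.
apply/matrixP => i j; rewrite (ord1 j).
rewrite (dphi_formula L dphi hf) !mxE (dpsi_formula L i dpsi).
rewrite /J1_integrand /J2_integrand.
rewrite /A /B /s /w /phi /psi.
set c := \sum_(k < p) _ * 'D_(ebasis R k) (fun t => ln _) th.
set d := \sum_(k < p) _ * 'D_(ebasis R k) (fun t => ustar W h f t x i 0) th.
set J := (X in \sum_j0 X i j0 * L j0 0).
have hsum : \sum_k J i k * L k 0 =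
   SA alpha lambda * fstar W h f th x `^ (1 + alpha) * ustar W h f th x i 0 * c
   - (gg x `^ SA alpha lambda - fstar W h f th x `^ SA alpha lambda)
      * fstar W h f th x `^ SB alpha lambda * d
   - (gg x `^ SA alpha lambda - fstar W h f th x `^ SA alpha lambda)
      * fstar W h f th x `^ SB alpha lambda * SB alpha lambda * ustar W h f th x i 0 * c.
  rewrite /c /d /J !mulr_sumr -!sumrB; apply: eq_bigr => k _.
  rewrite !mxE !big_ord1 !mxE.
  move: (SA alpha lambda) (SB alpha lambda) (fstar W h f th x `^ (1 + alpha)) (gg x `^ SA alpha lambda) (fstar W h f th x `^ SA alpha lambda) (fstar W h f th x `^ SB alpha lambda) (L k 0) => a b F1 G FA FB Lk.
  exact: alg1.
rewrite hsum [ustar W h f th x i 0]mxE.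
apply: alg2 => //.
- by rewrite /SA /SB; ring.
- exact: powR_split.
- exact: powR_split.
- exact: powR_split.
- rewrite -powRD; last by rewrite (gt_eqF hf) implybT.
  by congr (_ `^ _); rewrite /SA /SB; ring.
Qed.

Section Ints.
Variable R : realType.

Lemma RintegrableD (f g : R -> R) : Rintegrable f -> Rintegrable g ->
  Rintegrable (fun x => f x + g x).
Proof. move=> hf hg; exact: (integrableD measurableT hf hg). Qed.

Lemma RintegrableB (f g : R -> R) : Rintegrable f -> Rintegrable g ->
  Rintegrable (fun x => f x - g x).
Proof. move=> hf hg; exact: (integrableB measurableT hf hg). Qed.

Lemma RintegrableZl (k : R) (f : R -> R) : Rintegrable f ->
  Rintegrable (fun x => k * f x).
Proof.
move=> hf; have := @integrableZl _ _ _ (@lebesgue_measure R) setT measurableT k (EFin \o f) hf.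
by apply: eq_integrable => // x _.
Qed.

Lemma RintegrableZr (k : R) (f : R -> R) : Rintegrable f ->
  Rintegrable (fun x => f x * k).
Proof.
move=> hf; have := @RintegrableZl k f hf.
by apply: eq_integrable => // x _ /=; rewrite mulrC.
Qed.

Lemma Rint0 : Defs.Rint (fun _ : R => 0) = 0.
Proof. by rewrite /Defs.Rint Rintegral_cst // mul0r. Qed.

Lemma Rint_sum (I : Type) (s : seq I) (F : I -> R -> R) :
  (forall k, Rintegrable (F k)) ->
  Rintegrable (fun x => \sum_(k <- s) F k x) /\
  Defs.Rint (fun x => \sum_(k <- s) F k x) = \sum_(k <- s) Defs.Rint (F k).
Proof.
move=> hF; elim: s => [|a s [ih1 ih2]].
  rewrite big_nil.
  have -> : (fun x : R => \sum_(k <- [::]) F k x) = fun _ => 0.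
    by apply/funext => x; rewrite big_nil.
  split; last exact: Rint0.
  have := @integrable0 _ _ _ (@lebesgue_measure R) setT.
  by apply: eq_integrable => // x _ /=.
have -> : (fun x : R => \sum_(k <- a :: s) F k x) = fun x => F a x + \sum_(k <- s) F k x.
  by apply/funext => x; rewrite big_cons.
split; first exact: RintegrableD.
rewrite big_cons -ih2 /Defs.Rint RintegralD //; exact: hF.
Qed.

End Ints.

Lemma vint_lin (R : realType) (p : nat) (N1 N2 : R -> 'cV[R]_p) (J1 J2 : R -> 'M[R]_p)
  (A : R) (L : 'cV[R]_p) :
  vintegrable N1 -> vintegrable N2 -> mintegrable J1 -> mintegrable J2 ->
  vint (fun x => N1 x - N2 x - A^-1 *: ((A *: J1 x + J2 x) *m L))
  = vint N1 - vint N2 - A^-1 *: ((A *: mint J1 + mint J2) *m L).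
Proof.
move=> h1 h2 h3 h4; apply/matrixP => i j; rewrite (ord1 j) !mxE.
have -> : (fun x => (N1 x - N2 x - A^-1 *: ((A *: J1 x + J2 x) *m L)) i 0)
   = (fun x => (N1 x i 0 - N2 x i 0) - A^-1 * \sum_k ((A * J1 x i k + J2 x i k) * L k 0)).
  by apply/funext => x; rewrite !mxE; congr (_ - _ * _); apply: eq_bigr => k _; rewrite !mxE.
have hk : forall k, Rintegrable (fun x => (A * J1 x i k + J2 x i k) * L k 0).
  move=> k; apply: RintegrableZr; apply: RintegrableD => //.
  exact: RintegrableZl.
have [hs1 hs2] := @Rint_sum R _ (index_enum 'I_p) _ hk.
rewrite /Defs.Rint RintegralB //; last 2 first.
- exact: RintegrableB.
- exact: RintegrableZl.
rewrite RintegralB //.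
have -> : \int[@lebesgue_measure R]_(x in setT) (A^-1 * \sum_k (A * J1 x i k + J2 x i k) * L k 0)
   = A^-1 * Defs.Rint (fun x => \sum_k (A * J1 x i k + J2 x i k) * L k 0).
  by apply: RintegralZl.
congr (_ - _ * _).
rewrite hs2; apply: eq_bigr => k _.
rewrite !mxE /Defs.Rint.
have hJk : Rintegrable (fun x => A * J1 x i k + J2 x i k).
  by apply: RintegrableD => //; exact: RintegrableZl.
have -> : \int[@lebesgue_measure R]_(x in setT) ((A * J1 x i k + J2 x i k) * L k 0)
   = (\int[@lebesgue_measure R]_(x in setT) (A * J1 x i k + J2 x i k)) * L k 0.
  by apply: RintegralZr.
have -> : \int[@lebesgue_measure R]_(x in setT) (A * J1 x i k + J2 x i k)
   = \int[@lebesgue_measure R]_(x in setT) (A * J1 x i k) + \int[@lebesgue_measure R]_(x in setT) J2 x i k.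
  by apply: RintegralD => //; [exact: (@RintegrableZl R A _ (h3 i k)) | exact: h4].
have -> : \int[@lebesgue_measure R]_(x in setT) (A * J1 x i k)
   = A * \int[@lebesgue_measure R]_(x in setT) J1 x i k.
  by apply: RintegralZl => //; exact: h3.
by []. exact: h1. exact: h2.
Qed.
Theorem theorem1 (R : realType) (p : nat) (alpha lambda h : R)
  (W : R -> R -> R -> R) (f : 'cV[R]_p -> R -> R) (Theta : set 'cV[R]_p)
  (g : R -> R) (T : (R -> R) -> 'cV[R]_p) (y eps0 : R) :
  0 <= alpha -> 0 < h ->
  (* kernel: nonnegative, a probability density in x for each y *)
  (forall x z, 0 <= W x z h) ->
  (forall z, is_density (fun x => W x z h)) ->
  (* parametric family of densities on an open parameter set *)
  open Theta ->
  (forall theta, Theta theta -> is_density (f theta)) ->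
  (* G has Lebesgue density g *)
  is_density g ->
  (* positivity of the smoothed densities *)
  (forall theta x, Theta theta -> 0 < fstar W h f theta x) ->
  (forall x, 0 < smooth W h g x) ->
  0 < eps0 ->
  let gs := smooth_contam W h g y in     (* gs e = smoothed density of G_e *)
  let thg := T (smooth W h g) in         (* theta^g = T*(G) *)
  (* T*(G_e) is a minimum S*-divergence parameter, for 0 <= e < eps0 *)
  (forall e, 0 <= e < eps0 -> Theta (T (gs e))) ->
  (forall e, 0 <= e < eps0 -> forall theta, Theta theta ->
     Sdiv alpha lambda (gs e) (fstar W h f (T (gs e)))
       <= Sdiv alpha lambda (gs e) (fstar W h f theta)) ->
  (* ... and solves the estimating equation *)
  (forall e, 0 <= e < eps0 ->
     vintegrable (est_integrand alpha lambda W h f (gs e) (T (gs e))) /\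
     vint (est_integrand alpha lambda W h f (gs e) (T (gs e))) = 0) ->
  (* smoothness of the model in theta *)
  (forall x theta, Theta theta ->
     differentiable (fun t : 'cV[R]_p => fstar W h f t x) theta) ->
  (forall x, differentiable (fun t : 'cV[R]_p => ustar W h f t x) thg) ->
  (* the influence function exists (right derivative in e at 0) *)
  cvg ((fun e => e^-1 *: (T (gs e) - T (gs 0))) @ 0^'+) ->
  (* differentiation in e under the integral sign is permitted *)
  (exists D : R -> 'cV[R]_p,
     vintegrable D /\
     (forall x,
       (fun e => e^-1 *: (est_integrand alpha lambda W h f (gs e) (T (gs e)) x
                          - est_integrand alpha lambda W h f (gs 0) (T (gs 0)) x))
         @ 0^'+ --> D x) /\
     ((fun e => e^-1 *: (vint (est_integrand alpha lambda W h f (gs e) (T (gs e)))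
                         - vint (est_integrand alpha lambda W h f (gs 0) (T (gs 0)))))
         @ 0^'+ --> vint D)) ->
  (* the integrals defining N*_g(y) and J*_g exist, and J*_g is invertible *)
  vintegrable (N1_integrand alpha lambda W h f (smooth W h g) thg y) ->
  vintegrable (N2_integrand alpha lambda W h f (smooth W h g) thg) ->
  mintegrable (J1_integrand alpha W h f thg) ->
  mintegrable (J2_integrand alpha lambda W h f (smooth W h g) thg) ->
  Jstar alpha lambda W h f (smooth W h g) thg \in unitmx ->
  influence (fun e => T (gs e)) =
    invmx (Jstar alpha lambda W h f (smooth W h g) thg)
      *m Nstar alpha lambda W h f (smooth W h g) thg y.
Proof.
move=> hal hh hW hWd hTh hfd hgd hfpos hspos heps0 gs thg hTT hmin hest dfs dus hcvg
  [D [hDint [hDx hDv]]] hN1 hN2 hJ1 hJ2 hJu.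
have -> : influence (fun e => T (gs e)) =
  lim ((fun e => e^-1 *: (T (gs e) - T (gs 0))) @ 0^'+) by [].
set L := lim _.
have hL : (fun e => e^-1 *: (T (gs e) - T (gs 0))) @ 0^'+ --> L := hcvg.
have gs0 : gs 0 = smooth W h g.
  by apply/funext => x; rewrite /gs /smooth_contam subr0 mul1r mul0r addr0.
have hth : Theta thg.
  by rewrite /thg -gs0; apply: hTT; rewrite lexx heps0.
case: (eqVneq (SA alpha lambda) 0) => hA.
  have J0 : Jstar alpha lambda W h f (smooth W h g) thg = 0.
    rewrite /Jstar hA scale0r add0r; apply/matrixP => i j; rewrite !mxE.
    transitivity (Defs.Rint (fun _ : R => 0)); last exact: Rint0.
    congr Defs.Rint; apply/funext => x.
    by rewrite /J2_integrand hA !powRr0 subrr mul0r scale0r mxE.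
  move: hJu; rewrite J0 unitmxE.
  have := detZ 0 (1%:M : 'M[R]_p); rewrite scale0r => ->.
  rewrite det1 mulr1 expr0n.
  case: (eqVneq p 0%N) => [p0 _|pn0]; last by rewrite /= unitr0.
  apply/matrixP => i j; have := ltn_ord i; by rewrite {2}p0.
pose ct := fun e => if 0 < e then T (gs e) else T (gs 0) + e *: L.
have hct : is_derive (0:R) 1 ct L := ct_is_derive hL.
have ct0' : ct 0 = T (gs 0) by rewrite /ct ltxx scale0r addr0.
have ct0 : ct 0 = thg by rewrite ct0' gs0.
have hAB : SA alpha lambda + SB alpha lambda = 1 + alpha by rewrite /SA /SB; ring.
have hDx' : forall x, D x =
    N1_integrand alpha lambda W h f (smooth W h g) thg y x
    - N2_integrand alpha lambda W h f (smooth W h g) thg x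
    - (SA alpha lambda)^-1 *: ((SA alpha lambda *: J1_integrand alpha W h f thg x
        + J2_integrand alpha lambda W h f (smooth W h g) thg x) *m L).
  move=> x.
  have hs : 0 < smooth W h g x := hspos x.
  have hphi0 : 0 < fstar W h f (ct 0) x by rewrite ct0; apply: hfpos.
  have dphi : differentiable (fun t => fstar W h f t x) (ct 0) by rewrite ct0; apply: dfs.
  have dpsi : differentiable (fun t => ustar W h f t x) (ct 0) by rewrite ct0; apply: dus.
  have hE := @E_derive R p (SA alpha lambda) (SB alpha lambda) alpha (smooth W h g x)
    (W x y h) ct L (fun t => fstar W h f t x) (fun t => ustar W h f t x) hs hphi0 hct dphi dpsi.
  have hE2 := is_derive_eq hE (@pt_id R p alpha lambda W h f (smooth W h g) (ct 0) L y x
     hA hs hphi0 dphi dpsi).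
  rewrite ct0 in hE2.
  case: hE2 => dE vE.
  set E := (fun e => _) in dE vE.
  set V := (_ - _ - _) in vE.
  have hq : (fun h0 : R => h0^-1 *: ((E \o shift 0) (h0 *: 1) - E 0)) @ 0^' --> V.
    by rewrite -vE; exact: dE.
  have hqr := cvg_dnbhs_at_right hq.
  apply: (cvg_unique _ (hDx x)); first exact: norm_hausdorff.
  apply: cvg_trans hqr; apply: near_eq_cvg; near=> e.
  have e0 : 0 < e by near: e; exact: nbhs_right_gt.
  have e1 : e < eps0 by near: e; exact: nbhs_right_lt.
  have e2 : e < 1 by near: e; apply: nbhs_right_lt; exact: ltr01.
  have Ee : e%:A + 0 = e by rewrite addr0; exact: mulr1.
  have hWxy := hW x y.
  have pos : forall e', 0 <= e' < 1 -> 0 < (1 - e') * smooth W h g x + e' * W x y h.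
    move=> e' /andP[h1 h2].
    have : 0 < (1 - e') * smooth W h g x by apply: mulr_gt0 => //; rewrite subr_gt0.
    have : 0 <= e' * W x y h by apply: mulr_ge0.
    lra.
  have Pe : 0 < fstar W h f (T (gs e)) x.
    by apply: hfpos; apply: hTT; rewrite (ltW e0) e1.
  have P0 : 0 < fstar W h f (T (gs 0)) x.
    by apply: hfpos; apply: hTT; rewrite lexx heps0.
  rewrite /= Ee /E /ct e0 ltxx scale0r addr0 /est_integrand /gs /smooth_contam.
  rewrite (@Kfun_conv R _ _ _ _ _ hA hAB) //; last by apply: pos; rewrite (ltW e0) e2.
  rewrite (@Kfun_conv R _ _ _ _ _ hA hAB) //; last by apply: pos; rewrite lexx ltr01.
have hDfun : D = fun x =>
    N1_integrand alpha lambda W h f (smooth W h g) thg y x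
    - N2_integrand alpha lambda W h f (smooth W h g) thg x
    - (SA alpha lambda)^-1 *: ((SA alpha lambda *: J1_integrand alpha W h f thg x
        + J2_integrand alpha lambda W h f (smooth W h g) thg x) *m L).
  by apply/funext => x; exact: hDx'.
have hvD : vint D = 0.
  apply: (cvg_unique _ hDv); first exact: norm_hausdorff.
  have h0 : (fun _ : R => (0 : 'cV[R]_p)) @ 0^'+ --> (0 : 'cV[R]_p) by apply: cvg_cst.
  apply: cvg_trans h0; apply: near_eq_cvg; near=> e.
  have e0 : 0 < e by near: e; exact: nbhs_right_gt.
  have e1 : e < eps0 by near: e; exact: nbhs_right_lt.
  rewrite (hest e _).2; last by rewrite (ltW e0) e1.
  by rewrite (hest 0 _).2 ?subrr ?scaler0 // lexx heps0.
rewrite hDfun vint_lin // in hvD.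
move/eqP: hvD; rewrite subr_eq0 => /eqP hvD.
have HJL : Jstar alpha lambda W h f (smooth W h g) thg *m L
         = Nstar alpha lambda W h f (smooth W h g) thg y.
  by rewrite /Nstar hvD scalerA mulfV // scale1r.
by rewrite -HJL mulKmx.
Unshelve. all: by end_near.
Qed.
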